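(* Let $\phi_k$, $k\in\{2,3,\dots\}$, be networks satisfying, for all $k\in\{2,3,\dots\}$, $\mathcal I(\phi_k)=\mathcal O(\mathbf P_2(\phi_2,\mathfrak I_{k-1}))$, $\phi_{k+1}=\phi_k\bullet\mathbf P_2(\phi_2,\mathfrak I_{k-1})$, and $$\phi_2=\left(\left(\begin{pmatrix}1&-1\\0&1\\0&-1\end{pmatrix},\begin{pmatrix}0\\0\\0\end{pmatrix}\right),\Bigl(\begin{pmatrix}1&1&-1\end{pmatrix},0\Bigr)\right)\in(\mathbb R^{3\times2}\times\mathbb R^3)\times(\mathbb R^{1\times3}\times\mathbb R).$$ Let $d\in\mathbb N$, $L\in\mathbb R$, let $D\subseteq\mathbb R^d$ be a set, let $f\colon D\to\mathbb R$ satisfy $|f(x)-f(y)|\le L\sum_{i=1}^d|x_i-y_i|$ for all $x,y\in D$, let $\mathcal M\subseteq D$ satisfy $|\mathcal M|\in\{2,3,\dots\}$, let $m\colon\{1,\dots,|\mathcal M|\}\to\mathcal M$ be bijective, let $W_1\in\mathbb R^{(2d)\times d}$ be the matrix whose rows $2i-1$ and $2i$ are $e_i^T$ and $-e_i^T$ ($i=1,\dots,d$, $e_i$ the standard unit vectors), let $W_2=(-L,-L,\dots,-L)\in\mathbb R^{1\times(2d)}$, for $z=(z_1,\dots,z_d)\in\mathcal M$ let $B_z=(-z_1,z_1,-z_2,z_2,\dots,-z_d,z_d)^T\in\mathbb R^{2d}$, let $\mathcal W_1\in\mathbb R^{(2d|\mathcal M|)\times d}$ be $W_1$ stacked vertically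 $|\mathcal M|$ times, $\mathcal B_1=(B_{m(1)};B_{m(2)};\dots;B_{m(|\mathcal M|)})\in\mathbb R^{2d|\mathcal M|}$, $\mathcal W_2\in\mathbb R^{|\mathcal M|\times(2d|\mathcal M|)}$ the block-diagonal matrix with $|\mathcal M|$ diagonal blocks equal to $W_2$, $\mathcal B_2=(f(m(1)),\dots,f(m(|\mathcal M|)))^T$, and let $\Phi=\phi_{|\mathcal M|}\bullet((\mathcal W_1,\mathcal B_1),(\mathcal W_2,\mathcal B_2))$. Then (i) $\mathcal D(\Phi)=(d,2d|\mathcal M|,2|\mathcal M|-1,2|\mathcal M|-3,\dots,3,1)\in\mathbb N^{|\mathcal M|+2}$; (ii) $\|\mathcal T(\Phi)\|_\infty\le\max\{1,L,\sup_{z\in\mathcal M}\|z\|_\infty,2\sup_{z\in\mathcal M}|f(z)|\}$; (iii) $\sup_{x\in D}|f(x)-(\mathcal R_{\mathfrak r}(\Phi))(x)|\le 2L\sup_{x\in D}\inf_{y\in\mathcal M}\sum_{i=1}^d|x_i-y_i|$.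
   Context: A network is a tuple $\Phi=((W_1,B_1),\dots,(W_L,B_L))$ with $L\in\mathbb N$, $l_0,\dots,l_L\in\mathbb N$, $W_k\in\mathbb R^{l_k\times l_{k-1}}$, $B_k\in\mathbb R^{l_k}$; its length is $L$, its dimensions $\mathcal D(\Phi)=(l_0,\dots,l_L)$, input dimension $\mathcal I(\Phi)=l_0$, output dimension $\mathcal O(\Phi)=l_L$. Its ReLU realization $\mathcal R_{\mathfrak r}(\Phi)\colon\mathbb R^{l_0}\to\mathbb R^{l_L}$ is $x_0\mapsto W_Lx_{L-1}+B_L$ where $x_k=\mathfrak R(W_kx_{k-1}+B_k)$ for $k=1,\dots,L-1$ and $\mathfrak R$ applies $y\mapsto\max\{y,0\}$ componentwise. Its vectorization $\mathcal T(\Phi)\in\mathbb R^{\sum_kl_k(l_{k-1}+1)}$ is the concatenation over $k=1,\dots,L$ of the entries of $W_k$ listed row by row followed by the entries of $B_k$; $\|\cdot\|_\infty$ is the maximum norm. Composition: if $\Phi_1=((W_1,B_1),\dots,(W_L,B_L))$, $\Phi_2=((\mathfrak W_1,\mathfrak B_1),\dots,(\mathfrak W_{\mathfrak L},\mathfrak B_{\mathfrak L}))$ with $\mathcal I(\Phi_1)=\mathcal O(\Phi_2)$, then $\Phi_1\bullet\Phi_2=((\mathfrak W_1,\mathfrak B_1),\dots,(\mathfrak W_{\mathfrak L-1},\mathfrak B_{\mathfrak L-1}),(W_1\mathfrak W_{\mathfrak L},W_1\mathfrak B_{\mathfrak L}+B_1),(W_2,B_2),\dots,(W_L,B_L))$.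 Parallelization: for networks $\Phi_1,\dots,\Phi_n$ of the same length $L$ with $\Phi_i=((W_{i,1},B_{i,1}),\dots,(W_{i,L},B_{i,L}))$, $\mathbf P_n(\Phi_1,\dots,\Phi_n)=((\mathrm{diag}(W_{1,k},\dots,W_{n,k}),(B_{1,k};\dots;B_{n,k})))_{k=1,\dots,L}$ (block-diagonal weights, stacked biases). Identity networks: $\mathfrak I_1=\bigl(((1,-1)^T,(0,0)^T),((1\ \ -1),0)\bigr)$ and $\mathfrak I_d=\mathbf P_d(\mathfrak I_1,\dots,\mathfrak I_1)$ for $d\in\mathbb N$. *)

(* Defs.v *)
From HB Require Import structures.
From mathcomp Require Import all_boot all_order all_algebra.
From mathcomp Require Import all_classical all_reals.
From mathcomp Require Import ereal.
Set Implicit Arguments.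
Unset Strict Implicit.
Unset Printing Implicit Defensive.
Import Order.TTheory GRing.Theory Num.Theory.
Local Open Scope ring_scope.

Inductive NN (R : Type) : nat -> nat -> Type :=
| NLast (i o : nat) (W : 'M[R]_(o, i)) (B : 'cV[R]_o) : NN R i o
| NCons (i h o : nat) (W : 'M[R]_(h, i)) (B : 'cV[R]_h) (N : NN R h o) : NN R i o.
Arguments NLast {R i o}.
Arguments NCons {R i h o}.

Record Net (R : Type) := MkNet { nin : nat; nout : nat; net : NN R nin nout }.
Arguments MkNet {R nin nout}.

Fixpoint dimsNN R i o (N : NN R i o) : seq nat :=
  match N with
  | NLast i o _ _ => [:: i; o]
  | NCons i _ _ _ _ N' => i :: dimsNN N'
  end.
Definition dims R (Phi : Net R) : seq nat := dimsNN (net Phi).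

Definition relu (R : realType) (y : R) : R := Num.max y 0.
Fixpoint realizeNN (R : realType) i o (N : NN R i o) : 'cV[R]_i -> 'cV[R]_o :=
  match N in NN _ i o return 'cV[R]_i -> 'cV[R]_o with
  | NLast _ _ W B => fun x => W *m x + B
  | NCons _ _ _ W B N' => fun x => realizeNN N' (map_mx (@relu R) (W *m x + B))
  end.
Definition realize (R : realType) (Phi : Net R) : 'cV[R]_(nin Phi) -> 'cV[R]_(nout Phi) :=
  realizeNN (net Phi).

(* the identification R^1 = R (junk value 0 for other dimensions) *)
Definition cV1_val (R : realType) k : 'cV[R]_k -> R :=
  match k return 'cV[R]_k -> R with
  | 1%N => fun v => v ord0 ord0
  | _ => fun _ => 0
  end.

Definition layer_vec (R : Type) h i (W : 'M[R]_(h, i)) (B : 'cV[R]_h) : seq R :=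
  [seq W a b | a <- enum 'I_h, b <- enum 'I_i] ++ [seq B a ord0 | a <- enum 'I_h].
Fixpoint vecNN R i o (N : NN R i o) : seq R :=
  match N with
  | NLast _ _ W B => layer_vec W B
  | NCons _ _ _ W B N' => layer_vec W B ++ vecNN N'
  end.
Definition vectorize R (Phi : Net R) : seq R := vecNN (net Phi).

Definition maxnorm_seq (R : realType) (s : seq R) : R := \big[Num.max/0]_(x <- s) `|x|.
Definition maxnorm_cV (R : realType) d (z : 'cV[R]_d) : R := \big[Num.max/0]_(i < d) `|z i ord0|.

Definition compose_first (R : realType) i h o (N : NN R h o) :
    'M[R]_(h, i) -> 'cV[R]_h -> NN R i o :=
  match N in NN _ h o return 'M[R]_(h, i) -> 'cV[R]_h -> NN R i o with
  | NLast _ _ W B => fun W' B' => NLast (W *m W') (W *m B' + B)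
  | NCons _ _ _ W B N' => fun W' B' => NCons (W *m W') (W *m B' + B) N'
  end.
(* compNN N1 N2 = N1 • N2 (N2 is applied first) *)
Fixpoint compNN (R : realType) i h (N2 : NN R i h) o (N1 : NN R h o) {struct N2} : NN R i o :=
  match N2 in NN _ i h return NN R h o -> NN R i o with
  | NLast _ _ W' B' => fun N1 => compose_first N1 W' B'
  | NCons _ _ _ W' B' N2' => fun N1 => NCons W' B' (compNN N2' N1)
  end N1.
(* Phi1 • Phi2, defined when I(Phi1) = O(Phi2) (a junk network otherwise) *)
Definition compose (R : realType) (Phi1 Phi2 : Net R) : Net R :=
  @MkNet R (nin Phi2) (nout Phi1)
    match nout Phi2 =P nin Phi1 with
    | ReflectT e => compNN (ecast k (NN R (nin Phi2) k) e (net Phi2)) (net Phi1)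
    | ReflectF _ => NLast 0 0
    end.

(* parallelization P_2 of two networks of the same length (junk otherwise) *)
Fixpoint parNN (R : realType) i1 o1 (N1 : NN R i1 o1) i2 o2 (N2 : NN R i2 o2) {struct N1}
    : NN R (i1 + i2) (o1 + o2) :=
  match N1 in NN _ i1 o1 return NN R (i1 + i2) (o1 + o2) with
  | NLast _ _ W1 B1 =>
      match N2 in NN _ i2 o2 return NN R (_ + i2) (_ + o2) with
      | NLast _ _ W2 B2 => NLast (block_mx W1 0 0 W2) (col_mx B1 B2)
      | NCons _ _ _ _ _ _ => NLast 0 0
      end
  | NCons _ _ _ W1 B1 M1 =>
      match N2 in NN _ i2 o2 return NN R (_ + i2) (_ + o2) with
      | NLast _ _ _ _ => NLast 0 0
      | NCons _ _ _ W2 B2 M2 => NCons (block_mx W1 0 0 W2) (col_mx B1 B2) (parNN M1 M2)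
      end
  end.
Definition par2 (R : realType) (Phi1 Phi2 : Net R) : Net R := MkNet (parNN (net Phi1) (net Phi2)).

(* identity network I_d = P_d(I_1,...,I_1), written out:
   first layer: block-diagonal with d blocks (1,-1)^T, zero bias;
   second layer: block-diagonal with d blocks (1 -1), zero bias. *)
Definition id_w1 (R : realType) d : 'M[R]_(2 * d, d) :=
  \matrix_(r < 2 * d, j < d)
    (if val r == (2 * val j)%N then 1 else if val r == (2 * val j).+1 then -1 else 0).
Definition id_w2 (R : realType) d : 'M[R]_(d, 2 * d) :=
  \matrix_(i < d, r < 2 * d)
    (if val r == (2 * val i)%N then 1 else if val r == (2 * val i).+1 then -1 else 0).
Definition IdNet (R : realType) d : Net R :=
  MkNet (NCons (id_w1 R d) 0 (NLast (id_w2 R d) 0)).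

Definition phi2_w1 (R : realType) : 'M[R]_(3, 2) :=
  \matrix_(i < 3, j < 2)
    (if val i == 0%N then (if val j == 0%N then 1 else -1)
     else if val j == 0%N then 0 else if val i == 1%N then 1 else -1).
Definition phi2_w2 (R : realType) : 'M[R]_(1, 3) :=
  \matrix_(i < 1, j < 3) (if val j == 2%N then -1 else 1).
Definition phi2 (R : realType) : Net R :=
  MkNet (NCons (phi2_w1 R) 0 (NLast (phi2_w2 R) 0)).

(* W_1 in R^{(2d) x d}: rows 2i-1, 2i are e_i^T, -e_i^T (1-based) *)
Definition W1mat (R : realType) d : 'M[R]_(2 * d, d) :=
  \matrix_(r < 2 * d, j < d)
    (if val r == (2 * val j)%N then 1 else if val r == (2 * val j).+1 then -1 else 0).
Definition W2mat (R : realType) d (L : R) : 'M[R]_(1, 2 * d) := const_mx (- L).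
Lemma half_ord_proof d (r : 'I_(2 * d)) : (r./2 < d)%N.
Proof. by rewrite ltn_half_double -mul2n. Qed.
Definition half_ord d (r : 'I_(2 * d)) : 'I_d := Ordinal (half_ord_proof r).

Definition Bvec (R : realType) d (z : 'cV[R]_d) : 'cV[R]_(2 * d) :=
  \col_(r < 2 * d) (if odd r then z (half_ord r) ord0 else - z (half_ord r) ord0).

Definition approxNet (R : realType) d n (L : R) (f : 'cV[R]_d -> R) (m : 'I_n -> 'cV[R]_d)
    : Net R :=
  MkNet (NCons
    (@mxcol R n (fun _ => 2 * d)%N d (fun _ => W1mat R d))
    (@mxcol R n (fun _ => 2 * d)%N 1 (fun i => Bvec (m i)))
    (NLast
      (@mxblock R n n (fun _ => 1%N) (fun _ => 2 * d)%N
         (fun i j => if i == j then W2mat d L else 0))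
      (@mxcol R n (fun _ => 1%N) 1 (fun i => (f (m i))%:M)))).
Arguments approxNet {R} d n L f m.
Arguments realize {R} Phi.
Arguments dims {R} Phi.
Arguments vectorize {R} Phi.
Arguments compose {R} Phi1 Phi2.
Arguments par2 {R} Phi1 Phi2.
Arguments cV1_val {R k}.

(* Main.v *)
Require Import Defs.
From HB Require Import structures.
From mathcomp Require Import all_boot all_order all_algebra.
From mathcomp Require Import all_classical all_reals.
From mathcomp Require Import ereal.
From mathcomp Require Import zify.
From mathcomp Require Import lra.
Import Order.TTheory GRing.Theory Num.Theory.
Local Open Scope classical_set_scope.
Local Open Scope ring_scope.

Section Helpers.
Variable R : realType.

Lemma sum_uniq_nz (I : finType) (F : I -> R) a :
  0 <= a -> (forall j, `|F j| <= a) ->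
  (forall i j, F i != 0 -> F j != 0 -> i = j) ->
  \sum_j `|F j| <= a.
Proof.
move=> a0 Fa Fu.
case: (pickP (fun i => F i != 0)) => [i0 Hi0|H0].
  rewrite (bigD1 i0) //= big1 ?addr0 // => j Hj.
  case: (eqVneq (F j) 0) => [->|Hnz]; first by rewrite normr0.
  by rewrite (Fu _ _ Hi0 Hnz) eqxx in Hj.
rewrite big1 // => j _; move: (H0 j) => /= /negbFE/eqP ->; by rewrite normr0.
Qed.

Lemma mul_bound1 m k p (A : 'M[R]_(m,k)) (C : 'M[R]_(k,p)) r c a s :
  0 <= a -> 0 <= s -> (forall i, `|A r i| <= a) -> (forall i, `|C i c| <= s) ->
  (forall i j, C i c != 0 -> C j c != 0 -> i = j) ->
  `|(A *m C) r c| <= a * s.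
Proof.
move=> a0 s0 Aa Cs Cu; rewrite mxE.
apply: le_trans (ler_norm_sum _ _ _) _.
apply: sum_uniq_nz; first exact: mulr_ge0.
  by move=> j; rewrite normrM ler_pM.
move=> i j; rewrite !mulf_eq0 !negb_or => /andP[_ Hi] /andP[_ Hj].
exact: Cu.
Qed.

Lemma mul_bound2 m k p (A : 'M[R]_(m,k)) (C : 'M[R]_(k,p)) r c a s :
  0 <= a -> (\sum_i `|A r i| <= s) -> (forall i, `|C i c| <= a) ->
  `|(A *m C) r c| <= s * a.
Proof.
move=> a0 As Ca; rewrite mxE.
apply: le_trans (ler_norm_sum _ _ _) _.
apply: (@le_trans _ _ (\sum_i `|A r i| * a)).
  by apply: ler_sum => i _; rewrite normrM ler_wpM2l.
by rewrite -mulr_suml ler_wpM2r.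
Qed.

Lemma cast_lin m m' h p (e : m = m') (A : 'M[R]_(m,h)) (u : 'M[R]_(h,p)) (B : 'M[R]_(m,p)) :
  castmx (e, erefl) (A *m u + B) = castmx (e, erefl) A *m u + castmx (e, erefl) B.
Proof. by case: m' / e; rewrite !castmx_id. Qed.

Lemma cast0 m m' p (e : m = m') : castmx (e, erefl) (0 : 'M[R]_(m,p)) = 0.
Proof. by case: m' / e; rewrite castmx_id. Qed.

Lemma relu_abs (a : R) : relu a + relu (- a) = `|a|.
Proof.
rewrite /relu /=; case: (lerP 0 a) => ha; case: (lerP 0 (- a)) => hb.
- have -> : a = 0 by apply/eqP; rewrite eq_le ha -oppr_ge0 hb.
  by rewrite normr0 oppr0 addr0.
- by rewrite addr0 ger0_norm.
- by rewrite add0r ltr0_norm.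
- by move: hb; rewrite oppr_lt0 => hb; move: (lt_trans ha hb); rewrite ltxx.
Qed.

Lemma ev_proof k (t : 'I_k) : (2 * t < 2 * k)%N.
Proof. by rewrite ltn_pmul2l. Qed.
Arguments ev_proof {k}.
Lemma od_proof k (t : 'I_k) : ((2 * t).+1 < 2 * k)%N.
Proof. have := ltn_ord t; lia. Qed.
Arguments od_proof {k}.
Definition ev k (t : 'I_k) : 'I_(2 * k) := Ordinal (ev_proof t).
Definition od k (t : 'I_k) : 'I_(2 * k) := Ordinal (od_proof t).
Arguments ev {k}. Arguments od {k}.

Lemma half_ev k (t : 'I_k) : half_ord (ev t) = t.
Proof. by apply: val_inj; rewrite /= mul2n half_double. Qed.
Lemma half_od k (t : 'I_k) : half_ord (od t) = t.
Proof. by apply: val_inj; rewrite /= mul2n uphalf_double. Qed.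
Lemma odd_ev k (t : 'I_k) : odd (ev t) = false.
Proof. by rewrite /= mul2n odd_double. Qed.
Lemma odd_od k (t : 'I_k) : odd (od t) = true.
Proof. by rewrite /= mul2n odd_double. Qed.

Lemma half_cases k (r : 'I_(2 * k)) : r = if odd r then od (half_ord r) else ev (half_ord r).
Proof.
apply: val_inj; have := odd_double_half r; case: ifP => Ho /=; rewrite -!mul2n /=; lia.
Qed.

Lemma sum_pair k (F : 'I_(2 * k) -> R) :
  \sum_r F r = \sum_(t < k) (F (ev t) + F (od t)).
Proof.
rewrite (partition_big (@half_ord k) xpredT) //=.
apply: eq_bigr => t _.
rewrite (bigD1 (ev t)) /= ?half_ev ?eqxx //.
rewrite (bigD1 (od t)) /= ?half_od ?eqxx //; last first.
  by apply/negP => /eqP/(congr1 val) /= /eqP; rewrite -addn1 -{2}[(2*t)%N]addn0 eqn_add2l.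
rewrite big_pred0 ?addr0 // => r; apply/negP => /andP[/andP[/eqP Ht Hne1] Hne2].
move: Hne1 Hne2; have E := half_cases k r; rewrite Ht in E.
by case: (odd r) E => ->; rewrite eqxx.
Qed.

Lemma relu_id (a : R) : relu a - relu (- a) = a.
Proof.
rewrite /relu /=; case: (lerP 0 a) => ha; case: (lerP 0 (- a)) => hb.
- have -> : a = 0 by apply/eqP; rewrite eq_le ha -oppr_ge0 hb.
  by rewrite oppr0 subr0.
- by rewrite subr0.
- by rewrite sub0r opprK.
- by move: hb; rewrite oppr_lt0 => hb; move: (lt_trans ha hb); rewrite ltxx.
Qed.

Lemma W1_ev d (x : 'cV[R]_d) (t : 'I_d) : (W1mat R d *m x) (ev t) 0 = x t 0.
Proof.
rewrite mxE (bigD1 t) //= big1 => [|j Hj]; rewrite !mxE /=.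
  by rewrite eqxx mul1r addr0.
have -> : (2 * t == 2 * j)%N = false by apply/negP => /eqP; move: Hj => /eqP Hj H; apply: Hj; apply: val_inj => /=; lia.
have -> : (2 * t == (2 * j).+1)%N = false by apply/negP => /eqP; lia.
by rewrite mul0r.
Qed.

Lemma W1_od d (x : 'cV[R]_d) (t : 'I_d) : (W1mat R d *m x) (od t) 0 = - x t 0.
Proof.
rewrite mxE (bigD1 t) //= big1 => [|j Hj]; rewrite !mxE /=.
  have -> : ((2 * t).+1 == 2 * t)%N = false by apply/negP => /eqP; lia.
  by rewrite eqxx mulN1r addr0.
have -> : ((2 * t).+1 == 2 * j)%N = false by apply/negP => /eqP; lia.
have -> : ((2 * t).+1 == (2 * j).+1)%N = false by apply/negP => /eqP; move: Hj => /eqP Hj H; apply: Hj; apply: val_inj => /=; lia.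
by rewrite mul0r.
Qed.

Lemma Bvec_ev d (z : 'cV[R]_d) (t : 'I_d) : Bvec z (ev t) 0 = - z t 0.
Proof. by rewrite mxE odd_ev half_ev. Qed.
Lemma Bvec_od d (z : 'cV[R]_d) (t : 'I_d) : Bvec z (od t) 0 = z t 0.
Proof. by rewrite mxE odd_od half_od. Qed.

Lemma sum_relu_dist d (x z : 'cV[R]_d) :
  \sum_r relu ((W1mat R d *m x + Bvec z) r 0) = \sum_t `|x t 0 - z t 0|.
Proof.
rewrite sum_pair; apply: eq_bigr => t _.
rewrite [X in relu X + _]mxE [X in _ + relu X]mxE W1_ev W1_od Bvec_ev Bvec_od.
by rewrite -relu_abs opprD opprK.
Qed.

Lemma id_w2_ev k (t0 t : 'I_k) : id_w2 R k t0 (ev t) = if t == t0 then 1 else 0.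
Proof.
rewrite mxE /=; case: (eqVneq t t0) => [->|/eqP H]; first by rewrite eqxx.
have -> : (2 * t == 2 * t0)%N = false.
 apply/negP => /eqP Hv; apply: H; apply: val_inj; move: Hv; simpl; lia.
have -> : (2 * t == (2 * t0).+1)%N = false by apply/negP => /eqP; lia.
by [].
Qed.

Lemma id_w2_od k (t0 t : 'I_k) : id_w2 R k t0 (od t) = if t == t0 then -1 else 0.
Proof.
rewrite mxE /=; case: (eqVneq t t0) => [->|/eqP H].
  have -> : ((2 * t0).+1 == 2 * t0)%N = false by apply/negP => /eqP; lia.
  by rewrite eqxx.
have -> : ((2 * t).+1 == 2 * t0)%N = false by apply/negP => /eqP; lia.
have -> : ((2 * t).+1 == (2 * t0).+1)%N = false by apply/negP => /eqP Hv; apply: H; apply: val_inj; move: Hv; simpl; lia.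
by [].
Qed.

Lemma mapE p q (A : 'M[R]_(p,q)) i j : map_mx (@relu R) A i j = relu (A i j).
Proof. by rewrite mxE. Qed.

Lemma id_net_id k (v : 'cV[R]_k) :
  id_w2 R k *m map_mx (@relu R) (id_w1 R k *m v + 0) + 0 = v.
Proof.
rewrite !addr0; apply/matrixP => t0 j; rewrite (ord1 j) mxE sum_pair.
have -> : id_w1 R k = W1mat R k by [].
rewrite (bigD1 t0) //= big1 => [|t Ht].
  by rewrite !mapE W1_ev W1_od id_w2_ev id_w2_od eqxx mul1r mulN1r addr0 relu_id.
by rewrite id_w2_ev id_w2_od (negbTE Ht) !mul0r addr0.
Qed.

Lemma phi2_val (u : 'cV[R]_2) :
  (phi2_w2 R *m map_mx (@relu R) (phi2_w1 R *m u + 0) + 0) 0 0 = relu (u 0 0 - u 1 0) + u 1 0.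
Proof.
rewrite addr0 mxE !big_ord_recr big_ord0 /= !mapE addr0 !mxE !big_ord_recr !big_ord0 /= !mxE /=.
have -> : widen_ord (leqnSn 1) ord_max = 0 :> 'I_2 by apply: val_inj.
have -> : ord_max = 1 :> 'I_2 by apply: val_inj.
rewrite !add0r !mul1r !mul0r !add0r mulN1r mulN1r -addrA relu_id.
by [].
Qed.

Lemma relu_max2 (a b : R) :
  (a <= relu (a - b) + b /\ b <= relu (a - b) + b) /\
  (relu (a - b) + b = a \/ relu (a - b) + b = b).
Proof.
rewrite /relu /=; case: (lerP 0 (a - b)) => h.
  rewrite subrK lexx; split; [split=> //; by rewrite -subr_ge0|by left].
rewrite add0r lexx; split; [split=> //; rewrite -subr_le0 ltW //|by right].
Qed.

Lemma compose2 (i h1 o2 a h o : nat) (W1 : 'M[R]_(h1, i)) (B1 : 'cV[R]_h1)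
  (W2 : 'M[R]_(o2, h1)) (B2 : 'cV[R]_o2) (W : 'M[R]_(h, a)) (B : 'cV[R]_h)
  (rest : NN R h o) (e : o2 = a) :
  compose (MkNet (NCons W B rest)) (MkNet (NCons W1 B1 (NLast W2 B2))) =
  MkNet (NCons W1 B1 (NCons (W *m castmx (e, erefl) W2) (W *m castmx (e, erefl) B2 + B) rest)).
Proof.
rewrite /compose /=; case: eqP => [e'|]; last by [].
rewrite (eq_irrelevance e' e); case: a / e W rest {e'} => W rest /=.
by rewrite !castmx_id.
Qed.

Lemma realize_compose2 (i h1 o2 a h o : nat) (W1 : 'M[R]_(h1, i)) (B1 : 'cV[R]_h1)
  (W2 : 'M[R]_(o2, h1)) (B2 : 'cV[R]_o2) (W : 'M[R]_(h, a)) (B : 'cV[R]_h)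
  (rest : NN R h o) (e : o2 = a) (x : 'cV[R]_i) :
  realize (compose (MkNet (NCons W B rest)) (MkNet (NCons W1 B1 (NLast W2 B2)))) x =
  realizeNN (NCons W1 B1 (NCons (W *m castmx (e, erefl) W2) (W *m castmx (e, erefl) B2 + B) rest)) x.
Proof.
rewrite /compose /realize /=; case: eqP => [e'|]; last by [].
rewrite (eq_irrelevance e' e); case: a / e W rest {e'} => W rest /=.
by rewrite !castmx_id.
Qed.

Lemma realize2 (i h1 o2 a h o : nat) (W1 : 'M[R]_(h1, i)) (B1 : 'cV[R]_h1)
  (W2 : 'M[R]_(o2, h1)) (B2 : 'cV[R]_o2) (W : 'M[R]_(h, a)) (B : 'cV[R]_h)
  (rest : NN R h o) (e : o2 = a) x :
  realizeNN (NCons W1 B1 (NCons (W *m castmx (e, erefl) W2) (W *m castmx (e, erefl) B2 + B) rest)) x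
  = realizeNN (NCons W B rest) (castmx (e, erefl) (realizeNN (NCons W1 B1 (NLast W2 B2)) x)).
Proof.
rewrite /= cast_lin mulmxDr !mulmxA addrA //.
Qed.

Lemma sig1_inj1 n (s t : 'I_(\sum_(i < n) (fun _ => 1%N) i)) :
  tagnat.sig1 s = tagnat.sig1 t -> s = t.
Proof.
move=> E; rewrite -(tagnat.sig2K s) -(tagnat.sig2K t).
move: (tagnat.sig2 s) (tagnat.sig2 t); rewrite E => u v.
by rewrite (ord1 u) (ord1 v).
Qed.

Lemma layer_bnd h i (W : 'M[R]_(h, i)) (B : 'cV[R]_h) c :
  (forall a b, `|W a b| <= c) -> (forall a, `|B a 0| <= c) ->
  all (fun x => `|x| <= c) (layer_vec W B).
Proof.
move=> HW HB; rewrite /layer_vec all_cat; apply/andP; split.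
  by apply/allP => x /allpairsP [[a b] [_ _ ->]].
by apply/allP => x /mapP [a _ ->].
Qed.

Lemma maxnorm_le (s : seq R) c : 0 <= c -> all (fun x => `|x| <= c) s -> maxnorm_seq s <= c.
Proof.
move=> c0; rewrite /maxnorm_seq; elim: s => [|x s IH]; first by rewrite big_nil.
by rewrite big_cons /= => /andP[hx hs]; rewrite ge_max hx IH.
Qed.

Lemma big_split_test m k (F : 'I_(m + k) -> R) : \sum_i F i = \sum_(i < m) F (lshift k i) + \sum_(i < k) F (rshift m i).
Proof. by rewrite big_split_ord. Qed.

Lemma block_entries m1 m2 n1 n2 (A : 'M[R]_(m1,n1)) (D : 'M[R]_(m2,n2)) c :
  0 <= c -> (forall r j, `|A r j| <= c) -> (forall r j, `|D r j| <= c) ->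
  forall r j, `|block_mx A 0 0 D r j| <= c.
Proof.
move=> c0 HA HD r j.
case: (split_ordP r) => r' ->; case: (split_ordP j) => j' ->;
  by rewrite ?block_mxEul ?block_mxEur ?block_mxEdl ?block_mxEdr ?mxE ?normr0.
Qed.

Lemma block_rowsum m1 m2 n1 n2 (A : 'M[R]_(m1,n1)) (D : 'M[R]_(m2,n2)) s :
  0 <= s -> (forall r, \sum_j `|A r j| <= s) -> (forall r, \sum_j `|D r j| <= s) ->
  forall r, \sum_j `|block_mx A 0 0 D r j| <= s.
Proof.
move=> s0 HA HD r; rewrite big_split_ord /=.
case: (split_ordP r) => r' ->.
  have -> : \sum_(j < n2) `|block_mx A 0 0 D (lshift m2 r') (rshift n1 j)| = 0.
    by apply: big1 => j _; rewrite block_mxEur mxE normr0.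
  rewrite addr0 (eq_bigr (fun j => `|A r' j|)) ?HA // => j _.
  by rewrite block_mxEul.
have -> : \sum_(j < n1) `|block_mx A 0 0 D (rshift m1 r') (lshift n2 j)| = 0.
  by apply: big1 => j _; rewrite block_mxEdl mxE normr0.
rewrite add0r (eq_bigr (fun j => `|D r' j|)) ?HD // => j _.
by rewrite block_mxEdr.
Qed.

Lemma block_coluniq m1 m2 n1 n2 (A : 'M[R]_(m1,n1)) (D : 'M[R]_(m2,n2)) :
  (forall c i i', A i c != 0 -> A i' c != 0 -> i = i') ->
  (forall c i i', D i c != 0 -> D i' c != 0 -> i = i') ->
  forall c i i', block_mx A 0 0 D i c != 0 -> block_mx A 0 0 D i' c != 0 -> i = i'.
Proof.
move=> HA HD c i i'.
case: (split_ordP c) => c' ->; case: (split_ordP i) => r ->; case: (split_ordP i') => r' ->;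
  rewrite ?block_mxEul ?block_mxEur ?block_mxEdl ?block_mxEdr ?mxE ?eqxx //.
  by move=> h1 h2; rewrite (HA _ _ _ h1 h2).
by move=> h1 h2; rewrite (HD _ _ _ h1 h2).
Qed.

Lemma cast_entries m m' p (e : m = m') (A : 'M[R]_(m, p)) c :
  (forall r j, `|A r j| <= c) -> forall r j, `|castmx (e, erefl) A r j| <= c.
Proof. by case: m' / e; rewrite castmx_id. Qed.

Lemma cast_coluniq m m' p (e : m = m') (A : 'M[R]_(m, p)) :
  (forall c i i', A i c != 0 -> A i' c != 0 -> i = i') ->
  forall c i i', castmx (e, erefl) A i c != 0 -> castmx (e, erefl) A i' c != 0 -> i = i'.
Proof. by case: m' / e; rewrite castmx_id. Qed.

Lemma phi2_w1_ent r j : `|phi2_w1 R r j| <= 1.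
Proof. by rewrite mxE; repeat case: ifP => _; rewrite ?normrN ?normr1 ?normr0 ?ler01. Qed.
Lemma phi2_w2_ent r j : `|phi2_w2 R r j| <= 1.
Proof. by rewrite mxE; repeat case: ifP => _; rewrite ?normrN ?normr1 ?normr0 ?ler01. Qed.
Lemma id_w1_ent k r j : `|id_w1 R k r j| <= 1.
Proof. by rewrite mxE; repeat case: ifP => _; rewrite ?normrN ?normr1 ?normr0 ?ler01. Qed.
Lemma id_w2_ent k r j : `|id_w2 R k r j| <= 1.
Proof. by rewrite mxE; repeat case: ifP => _; rewrite ?normrN ?normr1 ?normr0 ?ler01. Qed.
Lemma W1mat_ent k r j : `|W1mat R k r j| <= 1.
Proof. by rewrite mxE; repeat case: ifP => _; rewrite ?normrN ?normr1 ?normr0 ?ler01. Qed.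

Lemma phi2_w1_rowsum r : \sum_j `|phi2_w1 R r j| <= 2.
Proof.
rewrite !big_ord_recr big_ord0 /= add0r.
by apply: (@le_trans _ _ (1 + 1)); [apply: lerD; apply: phi2_w1_ent|].
Qed.

Lemma id_w1_rowsum k r : \sum_j `|id_w1 R k r j| <= 2.
Proof.
apply: (@le_trans _ _ 1); last by rewrite ler1n.
apply: sum_uniq_nz => [//|j|j j']; first exact: id_w1_ent.
rewrite !mxE.
have key : forall j0 : 'I_k, (if r == (2 * j0)%N :> nat then 1 else if r == (2 * j0).+1 :> nat then -1 else 0) != 0 :> R -> j0 = half_ord r.
  move=> j0; case: ifP => [/eqP H _|_]; first by apply: val_inj; rewrite /= H mul2n half_double.
  case: ifP => [/eqP H _|_]; last by rewrite eqxx.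
  by apply: val_inj; rewrite /= H mul2n /= uphalf_double.
by move=> /key -> /key ->.
Qed.

Lemma phi2_w2_coluniq c (i i' : 'I_1) : phi2_w2 R i c != 0 -> phi2_w2 R i' c != 0 -> i = i'.
Proof. by rewrite (ord1 i) (ord1 i'). Qed.

Lemma id_w2_coluniq k c (i i' : 'I_k) : id_w2 R k i c != 0 -> id_w2 R k i' c != 0 -> i = i'.
Proof.
rewrite !mxE.
have key : forall j0 : 'I_k, (if c == (2 * j0)%N :> nat then 1 else if c == (2 * j0).+1 :> nat then -1 else 0) != 0 :> R -> j0 = half_ord c.
  move=> j0; case: ifP => [/eqP H _|_]; first by apply: val_inj; rewrite /= H mul2n half_double.
  case: ifP => [/eqP H _|_]; last by rewrite eqxx.
  by apply: val_inj; rewrite /= H mul2n /= uphalf_double.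
by move=> /key -> /key ->.
Qed.

Lemma phi2_val' (u : 'cV[R]_2) :
  (phi2_w2 R *m map_mx (@relu R) (phi2_w1 R *m u)) 0 0 = relu (u 0 0 - u 1 0) + u 1 0.
Proof. by have := phi2_val u; rewrite !addr0. Qed.

Lemma id_net_id' k (v : 'cV[R]_k) :
  id_w2 R k *m map_mx (@relu R) (id_w1 R k *m v) = v.
Proof. by have := id_net_id k v; rewrite !addr0. Qed.

Definition Inv (k : nat) (N : Net R) : Prop :=
  exists a h (W : 'M[R]_(h, a)) (rest : NN R h 1),
   a = k /\ N = MkNet (NCons W 0 rest) /\
   (forall r i, `|W r i| <= 1) /\ (forall r, \sum_i `|W r i| <= 2) /\
   all (fun x => `|x| <= 1) (vecNN rest) /\
   dimsNN rest = [seq (2 * (k - j)).-1 | j <- iota 0 k] /\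
   (forall x : 'cV[R]_a, (forall i, x i 0 <= realizeNN (NCons W 0 rest) x 0 0) /\
       exists i, realizeNN (NCons W 0 rest) x 0 0 = x i 0).

Lemma Inv2 : Inv 2 (phi2 R).
Proof.
exists 2%N, 3%N, (phi2_w1 R), (NLast (phi2_w2 R) 0).
split; first by [].
split; first by [].
split; first exact: phi2_w1_ent.
split; first exact: phi2_w1_rowsum.
split; first by apply: layer_bnd => [a b|a]; [exact: phi2_w2_ent|rewrite mxE normr0 ler01].
split; first by [].
move=> x; rewrite /= phi2_val; have [[h0 h1] hm] := relu_max2 (x 0 0) (x 1 0).
split.
  move=> i; have [->|->] : i = 0 \/ i = 1.
      by case: i => [[|[|//]] Hi]; [left|right]; apply: val_inj.
    exact: h0.
  exact: h1.
by case: hm => ->; [exists 0|exists 1].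
Qed.

Lemma Inv_step k (N : Net R) : (2 <= k)%N -> Inv k N ->
  Inv k.+1 (compose N (par2 (phi2 R) (IdNet R (k - 1)))).
Proof.
move=> hk [a [h [W [rest [ea [-> [HW1 [HW2 [Hvec [Hdims Hreal]]]]]]]]]].
have e : (1 + (k - 1))%N = a by rewrite ea; lia.
have -> : par2 (phi2 R) (IdNet R (k - 1)) =
  MkNet (NCons (block_mx (phi2_w1 R) 0 0 (id_w1 R (k-1))) (col_mx 0 0)
          (NLast (block_mx (phi2_w2 R) 0 0 (id_w2 R (k-1))) (col_mx 0 0))) by [].
rewrite (compose2 _ _ _ _ _ _ _ _ _ _ _ _ _ e) !col_mx0.
exists (2 + (k-1))%N, (3 + 2 * (k-1))%N, (block_mx (phi2_w1 R) 0 0 (id_w1 R (k-1))).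
exists (NCons (W *m castmx (e, erefl) (block_mx (phi2_w2 R) 0 0 (id_w2 R (k-1))))
              (W *m castmx (e, erefl) 0 + 0) rest).
split; first lia.
split; first by [].
split; first by apply: block_entries => //; [exact: phi2_w1_ent|exact: id_w1_ent].
split; first by apply: block_rowsum => //; [exact: phi2_w1_rowsum|exact: id_w1_rowsum].
split.
  rewrite /= all_cat Hvec andbT; apply: layer_bnd => [r c|r].
    rewrite -[1 in X in _ <= X](mulr1 1); apply: mul_bound1 => //.
    - move=> i; apply: (cast_entries _ _ _ e _ 1) => r' c'.
      by apply: block_entries => //; [exact: phi2_w2_ent|exact: id_w2_ent].
    - apply: (cast_coluniq _ _ _ e) => c' i i'.
      apply: block_coluniq; [exact: phi2_w2_coluniq|exact: id_w2_coluniq].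
  by rewrite cast0 mulmx0 addr0 mxE normr0 ler01.
split.
  rewrite /= Hdims.
  have -> : iota 1 k = map (addn 1) (iota 0 k) by rewrite -iotaDl.
  rewrite -map_comp; congr cons; first by rewrite subn0; lia.
move=> x; rewrite realize2.
set y := realizeNN _ x.
have Ey : y = col_mx (phi2_w2 R *m map_mx (@relu R) (phi2_w1 R *m usubmx x)) (dsubmx x).
  rewrite /y /= !addr0 -{1}(vsubmxK x) mul_block_col !mul0mx addr0 add0r map_col_mx.
  by rewrite mul_block_col !mul0mx addr0 add0r id_net_id'.
have [Hge [i0 Hi0]] := Hreal (castmx (e, erefl) y).
set out := realizeNN _ (castmx (e, erefl) y) 0 0 in Hge Hi0 *.
have Hz : forall j, castmx (e, erefl) y (cast_ord e j) 0 = y j 0.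
  by move=> j; rewrite castmxE /= cast_ordK cast_ord_id.
have Y0 : y (lshift _ 0) 0 = relu (x (lshift _ 0) 0 - x (lshift _ 1) 0) + x (lshift _ 1) 0.
  by rewrite Ey col_mxEu phi2_val' !mxE.
have [[h0 h1] hm] := relu_max2 (x (lshift (k-1) 0) 0) (x (lshift (k-1) 1) 0).
have Yd : forall j, y (rshift _ j) 0 = x (rshift _ j) 0.
  by move=> j; rewrite Ey col_mxEd mxE.
split.
  move=> i; case: (split_ordP i) => j ->.
    have Hj : x (lshift _ j) 0 <= y (lshift _ 0) 0.
      rewrite Y0; have [->|->] : j = 0 \/ j = 1.
          by case: j => [[|[|//]] Hj]; [left|right]; apply: val_inj.
        exact: h0.
      exact: h1.
    by apply: le_trans Hj _; rewrite -Hz; exact: Hge.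
  by rewrite -Yd -Hz; exact: Hge.
rewrite Hi0 -[i0](cast_ordKV e) Hz.
case: (split_ordP (cast_ord (esym e) i0)) => j ->.
  rewrite (ord1 j) Y0; case: hm => ->; [by exists (lshift _ 0)|by exists (lshift _ 1)].
by exists (rshift _ j); exact: Yd.
Qed.

Lemma mx0E p q (i : 'I_p) (j : 'I_q) : (0 : 'M[R]_(p,q)) i j = 0.
Proof. by rewrite mxE. Qed.

Lemma scal1E (a : R) (i j : 'I_1) : (a%:M : 'M[R]_1) i j = a.
Proof. by rewrite (ord1 i) (ord1 j) mxE eqxx mulr1n. Qed.

Lemma Inv_phi (phi : nat -> Net R)
  (Hrec : forall k : nat, (2 <= k)%N ->
     phi k.+1 = compose (phi k) (par2 (phi 2%N) (IdNet R (k - 1))))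
  (H2 : phi 2%N = phi2 R) k : (2 <= k)%N -> Inv k (phi k).
Proof.
elim: k => [//|k IH] hk.
case: (eqVneq k 1%N) => [->|hk1]; first by rewrite H2; exact: Inv2.
have hk2 : (2 <= k)%N by move: hk hk1; case: k {IH} => [|[|k]].
by rewrite Hrec // H2; apply: Inv_step => //; apply: IH.
Qed.

Lemma approx_val d n L (f : 'cV[R]_d -> R) (m : 'I_n -> 'cV[R]_d) (x : 'cV[R]_d) r :
  (realizeNN (net (approxNet d n L f m)) x) r 0 =
  f (m (tagnat.sig1 r)) - L * \sum_t `|x t 0 - m (tagnat.sig1 r) t 0|.
Proof.
rewrite /=.
have EU : map_mx (@relu R) (@mxcol R n (fun _ => 2 * d)%N d (fun _ => W1mat R d) *m x +
              @mxcol R n (fun _ => 2 * d)%N 1 (fun i => Bvec (m i))) =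
          @mxcol R n (fun _ => 2 * d)%N 1 (fun i => map_mx (@relu R) (W1mat R d *m x + Bvec (m i))).
  apply/matrixP => r' c; rewrite !mxE; congr relu; congr (_ + _).
  by apply: eq_bigr => j _; rewrite mxE.
rewrite EU mul_mxblock_mxrow mxE mxE.
rewrite (bigD1 (tagnat.sig1 r)) //= eqxx big1 => [|j Hj]; last by rewrite eq_sym (negbTE Hj) mul0mx.
rewrite addr0 [X in _ + X]mxE mxE scal1E.
rewrite addrC; congr (_ + _).
rewrite (eq_bigr (fun c => - L * relu ((W1mat R d *m x + Bvec (m (tagnat.sig1 r))) c 0))).
  by rewrite -mulr_sumr sum_relu_dist mulNr.
by move=> c _; rewrite !mxE.
Qed.

Lemma sup_img_ub (d n : nat) (M : set 'cV[R]_d) (m : 'I_n -> 'cV[R]_d) (F : 'cV[R]_d -> R) :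
  (forall i, M (m i)) -> M `<=` m @` setT -> (forall z, 0 <= F z) ->
  forall i, F (m i) <= sup [set F z | z in M].
Proof.
move=> Hfun Hsurj F0 i; apply: ub_le_sup; last by exists (m i).
exists (\sum_j F (m j)) => _ [z Mz <-]; have [j _ <-] := Hsurj z Mz.
by rewrite (bigD1 j) //= lerDl sumr_ge0.
Qed.

Lemma maxnorm_ge d (z : 'cV[R]_d) t : `|z t 0| <= maxnorm_cV z.
Proof. by rewrite /maxnorm_cV (bigD1 t) //= le_max lexx. Qed.

Lemma maxnorm_ge0 d (z : 'cV[R]_d) : 0 <= maxnorm_cV z.
Proof. rewrite /maxnorm_cV; elim/big_ind: _ => //= u v hu hv; by rewrite le_max hu. Qed.

End Helpers.

Theorem proposition3p5 (R : realType) (phi : nat -> Net R)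
  (Hin : forall k : nat, (2 <= k)%N ->
     nin (phi k) = nout (par2 (phi 2%N) (IdNet R (k - 1))))
  (Hrec : forall k : nat, (2 <= k)%N ->
     phi k.+1 = compose (phi k) (par2 (phi 2%N) (IdNet R (k - 1))))
  (H2 : phi 2%N = phi2 R)
  (d : nat) (Hd : (0 < d)%N) (L : R) (D : set 'cV[R]_d) (f : 'cV[R]_d -> R)
  (Hf : forall x y : 'cV[R]_d, D x -> D y ->
     `|f x - f y| <= L * \sum_(i < d) `|x i ord0 - y i ord0|)
  (M : set 'cV[R]_d) (HMD : M `<=` D) (n : nat) (Hn : (2 <= n)%N)
  (m : 'I_n -> 'cV[R]_d) (Hm : set_bij [set: 'I_n] M m) :
  let Phi := compose (phi n) (approxNet d n L f m) in
  [/\ dims Phi = ([:: d, 2 * d * n & [seq (2 * (n - k)).-1 | k <- iota 0 n]])%N,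
      maxnorm_seq (vectorize Phi) <=
        Num.max 1 (Num.max L (Num.max (sup [set maxnorm_cV z | z in M])
                                      (2 * sup [set `|f z| | z in M])))
    & (ereal_sup [set (`|f x - cV1_val (realize Phi x)|)%:E | x in D] <=
       (2 * L)%:E * ereal_sup
          [set ereal_inf [set (\sum_(i < d) `|x i ord0 - y i ord0|)%:E | y in M]
          | x in D])%E].
Proof.
move=> Phi.
have [Hfun Hinj Hsurj] := Hm.
have HmM : forall i, M (m i) by move=> i; apply: Hfun.
have HmD : forall i, D (m i) by move=> i; apply: HMD.
have [a [h [W [rest [ea [Ephi [HW1 [HW2 [Hvec [Hdims Hreal]]]]]]]]]] := @Inv_phi R phi Hrec H2 n Hn.
have e : (\sum_(i < n) (fun _ => 1%N) i)%N = a by rewrite ea sum_nat_const card_ord muln1.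
pose W1c := @mxcol R n (fun _ => 2 * d)%N d (fun _ => W1mat R d).
pose B1c := @mxcol R n (fun _ => 2 * d)%N 1 (fun i => Bvec (m i)).
pose W2c := @mxblock R n n (fun _ => 1%N) (fun _ => 2 * d)%N
         (fun i j => if i == j then W2mat d L else 0).
pose B2c := @mxcol R n (fun _ => 1%N) 1 (fun i => (f (m i))%:M).
have EA : approxNet d n L f m = MkNet (NCons W1c B1c (NLast W2c B2c)) by [].
have EPhi : Phi = MkNet (NCons W1c B1c (NCons (W *m castmx (e, erefl) W2c)
                     (W *m castmx (e, erefl) B2c + 0) rest)).
  by rewrite /Phi Ephi EA (@compose2 R _ _ _ _ _ _ _ _ _ _ _ _ _ e).
have HL : 0 <= L.
  have h0 : (0 < n)%N by apply: leq_trans Hn.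
  have h1 : (1 < n)%N by [].
  pose i0 := Ordinal h0; pose i1 := Ordinal h1.
  have Hne : m i0 != m i1.
    apply/negP => /eqP E; have := Hinj i0 i1 (mem_setT _) (mem_setT _) E => /(congr1 val) //.
  have [t Ht] : exists t, m i0 t 0 != m i1 t 0.
    apply/existsP; move: Hne; apply: contraNT; rewrite negb_exists => /forallP H.
    apply/eqP/matrixP => t j; rewrite (ord1 j); exact/eqP/negPn/H.
  have Hpos : 0 < \sum_(t0 < d) `|m i0 t0 0 - m i1 t0 0|.
    rewrite (bigD1 t) //= ltr_pwDl ?sumr_ge0 // normr_gt0 subr_eq0 //.
  have := Hf _ _ (HmD i0) (HmD i1).
  by move=> /(le_trans (normr_ge0 _)); rewrite pmulr_lge0.
split.
- by rewrite EPhi /dims /= Hdims sum_nat_const card_ord mulnC.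
- set supz := sup _; set supf := sup _.
  set C := Num.max 1 _.
  have C1 : 1 <= C by rewrite /C le_max lexx.
  have CL : L <= C by rewrite /C !le_max lexx orbT.
  have Cz : supz <= C by rewrite /C !le_max lexx !orbT.
  have Cf : 2 * supf <= C by rewrite /C !le_max lexx !orbT.
  have Hfs : forall i, `|f (m i)| <= supf.
    exact: (@sup_img_ub R d n M m (fun z => `|f z|) HmM Hsurj (fun z => normr_ge0 (f z))).
  have Hzs : forall i, maxnorm_cV (m i) <= supz.
    exact: (@sup_img_ub R d n M m (@maxnorm_cV R d) HmM Hsurj (@maxnorm_ge0 R d)).
  rewrite EPhi; apply: maxnorm_le; first exact: le_trans ler01 C1.
  have -> : vectorize (MkNet (NCons W1c B1c (NCons (W *m castmx (e, erefl) W2c)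
                     (W *m castmx (e, erefl) B2c + 0) rest))) =
     layer_vec W1c B1c ++ (layer_vec (W *m castmx (e, erefl) W2c) (W *m castmx (e, erefl) B2c + 0) ++ vecNN rest) by [].
  rewrite all_cat; apply/andP; split; last (rewrite all_cat; apply/andP; split).
  + apply: layer_bnd => [r c|r].
      by rewrite mxE; apply: le_trans (W1mat_ent _ _ _ _) C1.
    rewrite !mxE; apply: le_trans _ Cz; apply: le_trans (Hzs (tagnat.sig1 r)).
    by case: ifP => _; rewrite ?normrN maxnorm_ge.
  + apply: layer_bnd => [r c|r].
      apply: le_trans CL; rewrite -[L in X in _ <= X]mul1r; apply: mul_bound1 => //.
      * move=> i; apply: (@cast_entries R _ _ _ e _ L) => r' c'.
        rewrite mxE; case: (eqVneq (tagnat.sig1 r') (tagnat.sig1 c')) => _; rewrite mxE ?normrN ?ger0_norm // normr0 //.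
      * apply: (@cast_coluniq R _ _ _ e) => c' i i'; rewrite !mxE.
        case: (eqVneq (tagnat.sig1 i) (tagnat.sig1 c')) => [Hi|_]; last by rewrite mx0E eqxx.
        case: (eqVneq (tagnat.sig1 i') (tagnat.sig1 c')) => [Hi'|_]; last by rewrite mx0E eqxx.
        by move=> _ _; apply: sig1_inj1; rewrite Hi Hi'.
    rewrite addr0; apply: le_trans Cf; apply: mul_bound2.
    * by apply: le_trans (normr_ge0 _) (Hfs (Ordinal (leq_trans (isT : (0 < 2)%N) Hn))).
    * exact: HW2.
    * move=> i; apply: (@cast_entries R _ _ _ e _ supf) => r' c'.
      by rewrite mxE scal1E.
  + by apply: sub_all Hvec => x hx; apply: le_trans hx C1.
rewrite /Phi Ephi.
apply: ge_ereal_sup => _ [x Dx <-].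
rewrite (@realize_compose2 R _ _ _ _ _ _ W1c B1c W2c B2c W 0 rest e x).
rewrite (@realize2 R _ _ _ _ _ _ W1c B1c W2c B2c W 0 rest e x).
set v := realizeNN (NCons W1c B1c (NLast W2c B2c)) x.
have [Hge [j0 Hj0]] := Hreal (castmx (e, erefl) v).
set outv := realizeNN (NCons W 0 rest) (castmx (e, erefl) v) in Hge Hj0 *.
have -> : cV1_val outv = outv 0 0 by [].
set out := outv 0 0 in Hge Hj0 *.
have Hv : forall r, v r 0 = f (m (tagnat.sig1 r)) - L * \sum_t `|x t 0 - m (tagnat.sig1 r) t 0|.
  by move=> r; exact: (@approx_val R d n L f m x r).
have Hz : forall j, castmx (e, erefl) v j 0 = v (cast_ord (esym e) j) 0.
  by move=> j; rewrite castmxE /= cast_ord_id.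
set dist := fun y : 'cV[R]_d => \sum_(t < d) `|x t 0 - y t 0|.
have Hlow : forall i, f (m i) - L * dist (m i) <= out.
  move=> i; have := Hge (cast_ord e (tagnat.Rank i (ord0 : 'I_1))).
  by rewrite Hz cast_ordK Hv tagnat.Rank1K.
have Hup : out <= f x.
  rewrite Hj0 Hz Hv; set i := tagnat.sig1 _.
  have := Hf x (m i) Dx (HmD i); rewrite -/(dist (m i)) => H.
  rewrite lerBlDr addrC -lerBlDr; apply: le_trans H.
  by rewrite -normrN opprB ler_norm.
have Hb : forall i, `|f x - out| <= 2 * L * dist (m i).
  move=> i; rewrite ger0_norm ?subr_ge0 //.
  have := Hf x (m i) Dx (HmD i); rewrite -/(dist (m i)) => H.
  have H' := Hlow i.
  have H'' : f x - f (m i) <= L * dist (m i) by apply: le_trans (ler_norm _) H.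
  rewrite -mulrA mulr2n. lra.
have HLd : (0 <= (2 * L)%:E)%E by rewrite lee_fin mulr_ge0.
apply: (@le_trans _ _ ((2 * L)%:E * ereal_inf [set (dist y)%:E | y in M])%E); last first.
  apply: lee_wpmul2l => //; apply: ereal_sup_ubound; exists x => //.
case: (eqVneq L 0) => [L0|Lne].
  have := Hb (Ordinal (leq_trans (isT : (0 < 2)%N) Hn)).
  rewrite L0 !mulr0 mul0r => H0.
  by rewrite mul0e lee_fin.
have Lp : 0 < 2 * L by rewrite mulr_gt0 // lt0r Lne.
rewrite -[`|f x - out|](@divfK _ (2 * L)) ?gt_eqF // mulrC EFinM.
rewrite lee_pmul2l ?lte_fin //.
apply: le_ereal_inf_tmp => _ [y My <-]; have [i _ <-] := Hsurj y My.
by rewrite lee_fin ler_pdivrMr // mulrC; exact: Hb.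
Qed.
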